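(* Let $\mathcal{I}\subseteq[K]$ be nonempty, $\theta>0$, and let $\psi,r$ be strictly convex twice differentiable functions on $\Omega\subseteq\mathbb{R}$ such that, for positive learning rates $\gamma^s_i$ ($s\in\{t,t+1\}$, $i\in\mathcal{I}$), each $\gamma^s_i\psi+\theta r$ has invertible derivative whose inverse is differentiable and convex. Let $\phi^s_{\mathcal{I}}(x)=\sum_{i\in\mathcal{I}}(\gamma^s_i\psi(x_i)+\theta r(x_i))$, $\hat\ell^t\in\mathbb{R}^K$, $c\in\mathbb{R}$, and $p,q$ with $p_i,q_i\in\Omega$ for $i\in\mathcal{I}$, $\sum_{i\in\mathcal{I}}p_i=\sum_{i\in\mathcal{I}}q_i$, and $\nabla\phi^{t+1}_{\mathcal{I}}(q)=\nabla\phi^t_{\mathcal{I}}(p)-\hat\ell^t_{\mathcal{I}}+c\cdot\mathbf{1}_{\mathcal{I}}$. Writing $A_i(u)=\gamma^{t+1}_i\psi''(u)+\theta r''(u)$ and $B_i(u)=\gamma^{t}_i\psi''(u)+\theta r''(u)$, we have $$c\le\Big(\sum_{i\in\mathcal{I}}\frac{1}{A_i(p_i)}\Big)^{-1}\sum_{i\in\mathcal{I}}\frac{(\gamma^{t+1}_i-\gamma^t_i)\psi'(p_i)+\hat\ell^t_i}{A_i(p_i)},\qquad c\ge\Big(\sum_{i\in\mathcal{I}}\frac{1}{B_i(q_i)}\Big)^{-1}\sum_{i\in\mathcal{I}}\frac{(\gamma^{t+1}_i-\gamma^t_i)\psi'(q_i)+\hat\ell^t_i}{B_i(q_i)},$$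 $$c\le\Big(\sum_{i\in\mathcal{I}}\frac{1}{B_i(p_i)}\Big)^{-1}\sum_{i\in\mathcal{I}}\frac{(\gamma^{t+1}_i-\gamma^t_i)\psi'(q_i)+\hat\ell^t_i}{B_i(p_i)},\qquad c\ge\Big(\sum_{i\in\mathcal{I}}\frac{1}{A_i(q_i)}\Big)^{-1}\sum_{i\in\mathcal{I}}\frac{(\gamma^{t+1}_i-\gamma^t_i)\psi'(p_i)+\hat\ell^t_i}{A_i(q_i)}.$$
   Context: Gradients of $\phi^s_{\mathcal{I}}$ are taken coordinatewise on $\mathcal{I}$; $v_{\mathcal{I}}$ agrees with $v$ on $\mathcal{I}$ and is $0$ elsewhere; $\mathbf{1}_{\mathcal{I}}$ is the indicator vector of $\mathcal{I}$; the gradient equation is required coordinatewise for $i\in\mathcal{I}$. *)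

(* Defs.v *)
From HB Require Import structures.
From mathcomp Require Import all_boot all_order all_algebra.
From mathcomp Require Import all_classical all_reals all_analysis.
Set Implicit Arguments. Unset Strict Implicit. Unset Printing Implicit Defensive.
Import Order.TTheory GRing.Theory Num.Theory.
Import numFieldNormedType.Exports.
Local Open Scope classical_set_scope.
Local Open Scope ring_scope.

Definition convex_on (R : realType) (D : set R) (f : R -> R) :=
  forall x y, D x -> D y -> forall t : R, 0 <= t <= 1 ->
    f (t * x + (1 - t) * y) <= t * f x + (1 - t) * f y.

Definition strictly_convex_on (R : realType) (D : set R) (f : R -> R) :=
  forall x y, D x -> D y -> x != y -> forall t : R, 0 < t < 1 ->
    f (t * x + (1 - t) * y) < t * f x + (1 - t) * f y.

Definition differentiable_on (R : realType) (D : set R) (f : R -> R) :=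
  forall x, D x -> derivable f x 1.

Definition twice_differentiable_on (R : realType) (D : set R) (f : R -> R) :=
  differentiable_on D f /\ differentiable_on D (derive1 f).

Definition inv_deriv_diff_convex (R : realType) (D : set R) (f : R -> R) :=
  exists g : R -> R,
    (forall x, D x -> g ((derive1 f) x) = x) /\
    (forall y, ((derive1 f) @` D) y -> D (g y) /\ (derive1 f) (g y) = y) /\
    differentiable_on ((derive1 f) @` D) g /\
    convex_on ((derive1 f) @` D) g.

Definition phiI (R : realType) (K : nat) (I : {set 'I_K}) (gam : 'I_K -> R)
  (theta : R) (psi r : R -> R) (x : 'I_K -> R) : R :=
  \sum_(i in I) (gam i * psi (x i) + theta * r (x i)).

Definition partial (R : realType) (K : nat) (F : ('I_K -> R) -> R)
  (i : 'I_K) (x : 'I_K -> R) : R :=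
  derive1 (fun u : R => F (fun j => if j == i then u else x j)) (x i).

(* Main.v *)
Require Import Defs.
From HB Require Import structures.
From mathcomp Require Import all_boot all_order all_algebra.
From mathcomp Require Import all_classical all_reals all_analysis.
From mathcomp Require Import ring lra.
Import Order.TTheory GRing.Theory Num.Theory.
Import numFieldNormedType.Exports.
Local Open Scope classical_set_scope.
Local Open Scope ring_scope.

Section S.
Variable R : realType.

Definition wconvex (D : set R) (f : R -> R) :=
  forall x y, D x -> D y -> x != y -> forall t : R, 0 < t < 1 ->
    f (t * x + (1 - t) * y) <= t * f x + (1 - t) * f y.

Lemma Dscale (h : R -> R) u w : derivable h u 1 -> 'D_w h u = w * derive1 h u.
Proof.
move=> /derivable1_diffP dh.
rewrite derive1E deriveE // deriveE //.
rewrite -[in LHS](mulr1 w).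
by rewrite -[w * 1]/(w *: (1:R)) linearZ.
Qed.

Lemma tangent (D : set R) (h : R -> R) u v : wconvex D h -> D u -> D v ->
  derivable h u 1 -> derive1 h u * (v - u) <= h v - h u.
Proof.
move=> cvx Du Dv dh.
have [->|uv] := eqVneq v u; first by rewrite !subrr mulr0.
rewrite mulrC -Dscale //.
have dw : derivable h u (v - u).
  by apply: diff_derivable; apply/derivable1_diffP.
set f := fun t : R => t^-1 *: (h (t *: (v - u) + u) - h u).
have fl : f @ 0^' --> 'D_(v - u) h u by exact: dw.
have fr : f @ 0^'+ --> 'D_(v - u) h u.
  apply: cvg_trans fl => A /= [e /= e0 He]; exists e => //= y ye y0.
  by apply: He => //; rewrite gt_eqF.
apply: (cvgr_to_le fr); near=> t.
have t0 : 0 < t by near: t; exact: nbhs_right_gt.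
have t1 : t < 1 by near: t; exact: nbhs_right_lt.
rewrite /f.
have := cvx v u Dv Du uv t (introT andP (conj t0 t1)).
have -> : t *: (v - u) + u = t * v + (1 - t) * u by rewrite /GRing.scale /=; ring.
move=> H.
rewrite /GRing.scale /= ler_pdivrMl //.
lra.
Unshelve. all: end_near.
Qed.


Lemma monoF' (D : set R) (F : R -> R) x z : wconvex D F ->
  (forall y, D y -> derivable F y 1) -> D x -> D z ->
  0 <= (derive1 F z - derive1 F x) * (z - x).
Proof.
move=> cvx dF Dx Dz.
have h1 := @tangent D F x z cvx Dx Dz (dF _ Dx).
have h2 := @tangent D F z x cvx Dz Dx (dF _ Dz).
nra.
Qed.

Lemma F''ge0 (D : set R) (F : R -> R) x : open D -> wconvex D F ->
  (forall y, D y -> derivable F y 1) -> D x -> derivable (derive1 F) x 1 ->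
  0 <= derive1 (derive1 F) x.
Proof.
move=> oD cvx dF Dx dF'.
have [e e0 He] : exists2 e : R, 0 < e & ball x e `<=` D.
  by apply/nbhs_ballP; apply: oD.
rewrite derive1E /derive; apply: limr_ge; first exact: dF'.
exists e => //= t te t0.
have Dt : D (t *: 1 + x).
  apply: He; move: te; rewrite /ball /= /GRing.scale /= mulr1.
  rewrite sub0r normrN (_ : x - (t + x) = - t); last by ring.
  by rewrite normrN.
have := @monoF' D F x _ cvx dF Dx Dt.
rewrite /GRing.scale /= mulr1 addrK.
move=> H.
have -> : t^-1 * (derive1 F (t + x) - derive1 F x) =
  ((derive1 F (t + x) - derive1 F x) * t) * (t^-1 ^+ 2).
  by field.
by apply: mulr_ge0 => //; apply: sqr_ge0.
Qed.



Lemma convex_w (D : set R) f : convex_on D f -> wconvex D f.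
Proof. by move=> c x y Dx Dy _ t /andP[t0 t1]; apply: c => //; rewrite !ltW. Qed.

Lemma keyineq (D : set R) (F : R -> R) x y : open D -> wconvex D F ->
  (forall z, D z -> derivable F z 1) ->
  (forall z, D z -> derivable (derive1 F) z 1) ->
  inv_deriv_diff_convex D F -> D x -> D y ->
  (0 < derive1 (derive1 F) x) /\ 
  ((derive1 F y - derive1 F x) / derive1 (derive1 F) x <= y - x).
Proof.
move=> oD cvx dF dF' [h [hinv [himg [hd hc]]]] Dx Dy.
have Dimx : (derive1 F @` D) (derive1 F x) by exists x.
have Dimy : (derive1 F @` D) (derive1 F y) by exists y.
have chain : derive1 h (derive1 F x) * derive1 (derive1 F) x = 1.
  rewrite -derive1_comp; [| exact: dF' | exact: hd].
  rewrite -(derive1_id x) !derive1E; apply: near_eq_derive.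
  near=> z.
  have Dz : D z by near: z; apply: oD.
  by rewrite /= hinv.
have ge0 := @F''ge0 D F x oD cvx dF Dx (dF' _ Dx).
have tg := @tangent _ h _ _ (@convex_w _ _ hc) Dimx Dimy (hd _ Dimx).
rewrite !hinv // in tg.
have ne0 : derive1 (derive1 F) x != 0.
  by apply/eqP => E; move: chain; rewrite E mulr0 => /eqP; rewrite eq_sym oner_eq0.
have hE : derive1 h (derive1 F x) = (derive1 (derive1 F) x)^-1.
  by apply: (mulIf ne0); rewrite chain mulVf.
split; first by rewrite lt_def ne0.
by rewrite mulrC -hE.
Unshelve. all: end_near.
Qed.


Lemma dlin (g th : R) (psi r : R -> R) z :
  derivable psi z 1 -> derivable r z 1 ->
  derivable (fun x => g * psi x + th * r x) z 1 /\
  derive1 (fun x => g * psi x + th * r x) z = g * derive1 psi z + th * derive1 r z.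
Proof.
move=> dp dr.
have -> : (fun x => g * psi x + th * r x) = (g \*: psi) + (th \*: r) by [].
split; first by apply: derivableD; apply: derivableZ.
rewrite derive1E deriveD; try by apply: derivableZ.
by rewrite !deriveZ // !derive1E.
Qed.

Lemma dlin2 (D : set R) (g th : R) (psi r : R -> R) z : open D ->
  differentiable_on D psi -> differentiable_on D r ->
  differentiable_on D (derive1 psi) -> differentiable_on D (derive1 r) -> D z ->
  derivable (derive1 (fun x => g * psi x + th * r x)) z 1 /\
  derive1 (derive1 (fun x => g * psi x + th * r x)) z =
    g * derive1 (derive1 psi) z + th * derive1 (derive1 r) z.
Proof.
move=> oD dp dr dp' dr' Dz.
have ne : \near z, (fun x => g * derive1 psi x + th * derive1 r x) z =
                   derive1 (fun x => g * psi x + th * r x) z.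
  near=> w.
  have Dw : D w by near: w; apply: oD.
  by rewrite (proj2 (dlin g th psi r w (dp _ Dw) (dr _ Dw))).
have [h1 h2] := dlin g th _ _ z (dp' _ Dz) (dr' _ Dz).
split; first exact: near_eq_derivable ne h1.
by rewrite derive1E -(near_eq_derive _ ne) -derive1E.
Unshelve. all: end_near.
Qed.

Lemma wconv_lin (D : set R) (g th : R) (psi r : R -> R) : 0 < g -> 0 < th ->
  strictly_convex_on D psi -> strictly_convex_on D r ->
  wconvex D (fun x => g * psi x + th * r x).
Proof.
move=> g0 th0 cp cr x y Dx Dy xy t tt.
have h1 := cp x y Dx Dy xy t tt.
have h2 := cr x y Dx Dy xy t tt.
nra.
Qed.


Lemma partialE (K : nat) (I : {set 'I_K}) (g : 'I_K -> R) (th : R) (psi r : R -> R)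
  (x : 'I_K -> R) i : i \in I -> derivable psi (x i) 1 -> derivable r (x i) 1 ->
  partial (phiI I g th psi r) i x = derive1 (fun u => g i * psi u + th * r u) (x i).
Proof.
move=> iI dp dr; rewrite /partial /phiI.
set C := \sum_(j in I | j != i) (g j * psi (x j) + th * r (x j)).
have -> : (fun u => \sum_(j in I) (g j * psi (if j == i then u else x j) +
                     th * r (if j == i then u else x j))) =
          (fun u => g i * psi u + th * r u) + cst C.
  apply/funext => u /=; rewrite (bigD1 i) //= eqxx; congr (_ + _).
  by apply: eq_bigr => j /andP[_ /negbTE ->].
have [d1 _] := dlin (g i) th psi r (x i) dp dr.
rewrite derive1E deriveD //.
by rewrite derive_cst addr0 -derive1E.
Qed.

Lemma sum_le (K : nat) (I : {set 'I_K}) (w a x y : 'I_K -> R) c :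
  I != finset.set0 -> (forall i, i \in I -> 0 < w i) ->
  (forall i, i \in I -> (c - a i) * w i <= y i - x i) ->
  \sum_(i in I) x i = \sum_(i in I) y i ->
  c <= (\sum_(i in I) w i)^-1 * \sum_(i in I) (a i * w i).
Proof.
move=> I0 w0 H sxy.
have [i0 i0I] := set0Pn I I0.
have sw : 0 < \sum_(i in I) w i.
  rewrite (bigD1 i0) //=; apply: ltr_wpDr; first by apply: sumr_ge0 => j /andP[jI _]; apply: ltW; apply: w0.
  exact: w0.
have : \sum_(i in I) (c - a i) * w i <= \sum_(i in I) (y i - x i) by apply: ler_sum.
rewrite sumrB -sxy subrr.
under eq_bigr do rewrite mulrBl.
rewrite sumrB -mulr_sumr subr_le0 => h.
by move: h; rewrite -ler_pdivlMr // [_^-1 * _]mulrC.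
Qed.

Lemma sum_ge (K : nat) (I : {set 'I_K}) (w a x y : 'I_K -> R) c :
  I != finset.set0 -> (forall i, i \in I -> 0 < w i) ->
  (forall i, i \in I -> (a i - c) * w i <= y i - x i) ->
  \sum_(i in I) x i = \sum_(i in I) y i ->
  c >= (\sum_(i in I) w i)^-1 * \sum_(i in I) (a i * w i).
Proof.
move=> I0 w0 H sxy.
have := @sum_le K I w (fun i => - a i) x y (- c) I0 w0.
have -> : \sum_(i in I) (- a i * w i) = - \sum_(i in I) (a i * w i).
  by rewrite -sumrN; apply: eq_bigr => i _; rewrite mulNr.
rewrite mulrN lerN2; apply => // i iI.
by rewrite opprK addrC; apply: H.
Qed.

End S.
Arguments tangent {R}. Arguments monoF' {R}. Arguments F''ge0 {R}. Arguments convex_w {R}. Arguments keyineq {R}. Arguments dlin {R}. Arguments dlin2 {R}. Arguments wconv_lin {R}. Arguments partialE {R}. Arguments sum_le {R}. Arguments sum_ge {R}.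

Theorem lemma36 (R : realType) (K : nat) (I : {set 'I_K}) (theta : R)
  (Omega : set R) (psi r : R -> R) (gt gt1 : 'I_K -> R)
  (ell : 'I_K -> R) (c : R) (p q : 'I_K -> R) :
  I != finset.set0 ->
  0 < theta ->
  open Omega -> is_interval Omega ->
  strictly_convex_on Omega psi -> strictly_convex_on Omega r ->
  twice_differentiable_on Omega psi -> twice_differentiable_on Omega r ->
  (forall i, i \in I -> 0 < gt i) ->
  (forall i, i \in I -> 0 < gt1 i) ->
  (forall i, i \in I ->
     inv_deriv_diff_convex Omega (fun x => gt i * psi x + theta * r x)) ->
  (forall i, i \in I ->
     inv_deriv_diff_convex Omega (fun x => gt1 i * psi x + theta * r x)) ->
  (forall i, i \in I -> Omega (p i)) ->
  (forall i, i \in I -> Omega (q i)) ->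
  \sum_(i in I) p i = \sum_(i in I) q i ->
  (forall i, i \in I ->
     partial (phiI I gt1 theta psi r) i q
     = partial (phiI I gt theta psi r) i p - ell i + c) ->
  let A i u := gt1 i * derive1 (derive1 psi) u + theta * derive1 (derive1 r) u in
  let B i u := gt i * derive1 (derive1 psi) u + theta * derive1 (derive1 r) u in
  [/\ c <= (\sum_(i in I) (A i (p i))^-1)^-1 *
           \sum_(i in I) (((gt1 i - gt i) * derive1 psi (p i) + ell i) / A i (p i)),
      c >= (\sum_(i in I) (B i (q i))^-1)^-1 *
           \sum_(i in I) (((gt1 i - gt i) * derive1 psi (q i) + ell i) / B i (q i)),
      c <= (\sum_(i in I) (B i (p i))^-1)^-1 *
           \sum_(i in I) (((gt1 i - gt i) * derive1 psi (q i) + ell i) / B i (p i))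
    & c >= (\sum_(i in I) (A i (q i))^-1)^-1 *
           \sum_(i in I) (((gt1 i - gt i) * derive1 psi (p i) + ell i) / A i (q i))].
Proof.

move=> I0 th0 oO _ cpsi cr [dpsi dpsi'] [dr dr'] gt0 gt10 invt invt1 Op Oq sPQ grad A B.
have Kk : forall g : 'I_K -> R, (forall i, i \in I -> 0 < g i) ->
   (forall i, i \in I -> inv_deriv_diff_convex Omega (fun x => g i * psi x + theta * r x)) ->
   forall i, i \in I -> forall x y, Omega x -> Omega y ->
   (0 < g i * derive1 (derive1 psi) x + theta * derive1 (derive1 r) x) /\
   ((g i * derive1 psi y + theta * derive1 r y - (g i * derive1 psi x + theta * derive1 r x))
      / (g i * derive1 (derive1 psi) x + theta * derive1 (derive1 r) x) <= y - x).
  move=> g g0 ginv i iI x y Ox Oy.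
  have := keyineq Omega (fun x => g i * psi x + theta * r x) x y oO
    (wconv_lin Omega (g i) theta psi r (g0 i iI) th0 cpsi cr)
    (fun z Dz => proj1 (dlin (g i) theta psi r z (dpsi z Dz) (dr z Dz)))
    (fun z Dz => proj1 (dlin2 Omega (g i) theta psi r z oO dpsi dr dpsi' dr' Dz))
    (ginv i iI) Ox Oy.
  rewrite (proj2 (dlin2 Omega (g i) theta psi r x oO dpsi dr dpsi' dr' Ox)).
  rewrite (proj2 (dlin (g i) theta psi r x (dpsi x Ox) (dr x Ox))).
  by rewrite (proj2 (dlin (g i) theta psi r y (dpsi y Oy) (dr y Oy))).
have gradE : forall i, i \in I ->
    gt1 i * derive1 psi (q i) + theta * derive1 r (q i) =
    gt i * derive1 psi (p i) + theta * derive1 r (p i) - ell i + c.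
  move=> i iI; have := grad i iI.
  rewrite (partialE K I gt1 theta psi r q i iI (dpsi _ (Oq i iI)) (dr _ (Oq i iI))).
  rewrite (partialE K I gt theta psi r p i iI (dpsi _ (Op i iI)) (dr _ (Op i iI))).
  rewrite (proj2 (dlin (gt1 i) theta psi r (q i) (dpsi _ (Oq i iI)) (dr _ (Oq i iI)))).
  by rewrite (proj2 (dlin (gt i) theta psi r (p i) (dpsi _ (Op i iI)) (dr _ (Op i iI)))).
split.
- apply: (sum_le K I _ _ p q) => // [i iI|i iI].
    by rewrite invr_gt0; have [] := Kk gt1 gt10 invt1 i iI (p i) (q i) (Op i iI) (Oq i iI).
  have [_ H] := Kk gt1 gt10 invt1 i iI (p i) (q i) (Op i iI) (Oq i iI).
  move: H; rewrite gradE //.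
  congr (_ * _ <= _); rewrite /A; lra.
- apply: (sum_ge K I _ _ q p) => // [i iI|i iI].
    by rewrite invr_gt0; have [] := Kk gt gt0 invt i iI (q i) (p i) (Oq i iI) (Op i iI).
  have [_ H] := Kk gt gt0 invt i iI (q i) (p i) (Oq i iI) (Op i iI).
  move: H; have := gradE i iI.
  move=> e; congr (_ * _ <= _); rewrite /B; lra.
- apply: (sum_le K I _ _ p q) => // [i iI|i iI].
    by rewrite invr_gt0; have [] := Kk gt gt0 invt i iI (p i) (q i) (Op i iI) (Oq i iI).
  have [_ H] := Kk gt gt0 invt i iI (p i) (q i) (Op i iI) (Oq i iI).
  move: H; have := gradE i iI.
  move=> e; congr (_ * _ <= _); rewrite /B; lra.
- apply: (sum_ge K I _ _ q p) => // [i iI|i iI].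
    by rewrite invr_gt0; have [] := Kk gt1 gt10 invt1 i iI (q i) (p i) (Oq i iI) (Op i iI).
  have [_ H] := Kk gt1 gt10 invt1 i iI (q i) (p i) (Oq i iI) (Op i iI).
  move: H; have := gradE i iI.
  move=> e; congr (_ * _ <= _); rewrite /A; lra.
Qed.
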